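(* Consider an asynchronous execution of the Arrow protocol for a request set $R$ on a tree $T$, with requests indexed $r_0,r_1,\dots,r_{|R|-1}$ in the resulting queueing order. Let $i\in[1,|R|-1]$ and let $(u_0,u_1,\dots,u_s)$ be the tree path from $u_0=v_i$ (node of $r_i$) to $u_s=v_{i-1}$ (node of its predecessor $r_{i-1}$). Then for every node $u_k$ on this path, among the ''find predecessor'' messages of all requests $r_j$ with $j\in[i,|R|-1]$, the message of $r_i$ is the first one that reaches node $u_k$ (or is generated at $u_k$).
   Context: Requests $r=(v,t)$ are issued at node $v$ at time $t\ge0$; $r_0=(v_0,0)$ is a dummy request. Arrow protocol on a weighted tree $T$: each node $u$ stores a pointer $\mathrm{link}(u)$ (itself or a neighbour), initially pointing towards $v_0$ with $\mathrm{link}(v_0)=v_0$. When $r$ is issued at $v$: if $\mathrm{link}(v)=v$, $r$ is queued behind the previous request at $v$; otherwise atomically the ''find predecessor'' message $\mathrm{find}(r)$ is sent to $\mathrm{link}(v)$ and $\mathrm{link}(v):=v$. When $u$ receives $\mathrm{find}(r)$ from neighbour $w$: if $\mathrm{link}(u)=u$, atomically $r$ is queued directly behind the last request issued at $u$ and $\mathrm{link}(u):=w$; otherwise atomically $\mathrm{find}(r)$ is forwarded to $\mathrm{link}(u)$ and $\mathrm{link}(u):=w$. In an asynchronous execution message delays are arbitrary, each delay over edge $e$ being at most the weight of $e$. *)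

(* Defs.v *)
From mathcomp Require Import all_boot all_order all_algebra.
Set Implicit Arguments. Unset Strict Implicit. Unset Printing Implicit Defensive.
Import Order.TTheory GRing.Theory Num.Theory.
Local Open Scope ring_scope.

Definition is_tree (V : finType) (adj : rel V) : Prop :=
  [/\ symmetric adj,
      irreflexive adj,
      (forall x y : V, exists p, path adj x p /\ last x p = y) &
      (forall (x : V) (p q : seq V), path adj x p -> path adj x q ->
          uniq (x :: p) -> uniq (x :: q) -> last x p = last x q -> p = q)].

Definition init_links (V : finType) (adj : rel V) (v0 : V) (link0 : V -> V) : Prop :=
  link0 v0 = v0 /\
  forall u, u != v0 -> adj u (link0 u) /\
    exists p, [/\ path adj (link0 u) p, last (link0 u) p = v0 & uniq (u :: link0 u :: p)].

(* Atomic events: the issuing of request a, or the delivery of the (unique,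
   currently in transit) find(a) message. *)
Inductive event (I : Type) := Issue of I | Deliver of I.

Record state (V I R : Type) := State {
  lnk : V -> V;
  lastreq : V -> I;                  (* last request issued at u (r0 at start) *)
  transit : I -> option (V * V * R); (* find(a) in transit: (sender, receiver, send time) *)
  predq : I -> option I              (* request behind which a has been queued *)
}.

Definition upd (V : eqType) (T : Type) (f : V -> T) (v : V) (x : T) : V -> T :=
  fun y => if y == v then x else f y.

Definition init_state (V I R : Type) (link0 : V -> V) (d : I) : state V I R :=
  State link0 (fun _ => d) (fun _ => None) (fun _ => None).

Definition step (V I : eqType) (R : Type) (rv : I -> V) (t : R)
    (s : state V I R) (e : event I) : state V I R :=
  match e with
  | Issue a =>
      let v := rv a in
      if lnk s v == v then
        State (lnk s) (upd (lastreq s) v a) (transit s)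
              (upd (predq s) a (Some (lastreq s v)))
      else
        State (upd (lnk s) v v) (upd (lastreq s) v a)
              (upd (transit s) a (Some (v, lnk s v, t))) (predq s)
  | Deliver a =>
      match transit s a with
      | None => s
      | Some (w, u, _) =>
          let tr := upd (transit s) a None in
          if lnk s u == u then
            State (upd (lnk s) u w) (lastreq s) tr
                  (upd (predq s) a (Some (lastreq s u)))
          else
            State (upd (lnk s) u w) (lastreq s)
                  (upd tr a (Some (u, lnk s u, t))) (predq s)
      end
  end.

Definition event_ok (V I : eqType) (R : numDomainType) (d : I) (rt : I -> R)
    (wt : V -> V -> R) (s : state V I R) (t : R) (e : event I) : Prop :=
  match e with
  | Issue a => a != d /\ t = rt a
  | Deliver a => exists w u ts, transit s a = Some (w, u, ts) /\ ts <= t <= ts + wt w u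
  end.

Fixpoint run_ok (V I : eqType) (R : numDomainType) (d : I) (rv : I -> V)
    (rt : I -> R) (wt : V -> V -> R) (s : state V I R) (t0 : R)
    (es : seq (R * event I)) : Prop :=
  match es with
  | [::] => forall a, transit s a = None
  | (t, e) :: es' =>
      [/\ t0 <= t, event_ok d rt wt s t e & run_ok d rv rt wt (step rv t s e) t es']
  end.

Definition state_after (V I : eqType) (R : Type) (rv : I -> V) (s0 : state V I R)
    (es : seq (R * event I)) : state V I R :=
  foldl (fun s te => step rv te.1 s te.2) s0 es.

Definition is_issue_of (I : eqType) (a : I) (e : event I) : bool :=
  if e is Issue b then b == a else false.

(* An asynchronous execution of Arrow for the request set I (dummy d),
   starting at time 0 from the initial configuration: every non-dummy
   request is issued exactly once. *)
Definition arrow_execution (V I : finType) (R : numDomainType) (d : I) (rv : I -> V)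
    (rt : I -> R) (wt : V -> V -> R) (link0 : V -> V) (es : seq (R * event I)) : Prop :=
  run_ok d rv rt wt (init_state R link0 d) 0 es /\
  forall a, a != d -> count (fun te => is_issue_of a te.2) es = 1%N.

(* Request a's find message reaches node u (or is generated / a is issued at u)
   at step k of the execution. *)
Definition visits (V I : finType) (R : Type) (rv : I -> V) (link0 : V -> V) (d : I)
    (es : seq (R * event I)) (a : I) (u : V) (k : nat) : Prop :=
  (k < size es)%N /\
  match ohead (drop k es) with
  | None => False
  | Some (_, Issue b) => b = a /\ rv a = u
  | Some (_, Deliver b) => b = a /\
      exists w ts, transit (state_after rv (init_state R link0 d) (take k es)) a
                   = Some (w, u, ts)
  end.

Definition queued_after (I : Type) (pr : I -> option I) (c a : I) : Prop :=
  exists n, iter n (fun o => obind pr o) (Some c) = Some a.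

(* Main.v *)
Require Import Defs.
From mathcomp Require Import all_boot all_order all_algebra.
From Stdlib Require Import Classical.
From mathcomp Require Import zify.
Import Order.TTheory GRing.Theory Num.Theory.

Module ArrowProof.
Set Implicit Arguments. Unset Strict Implicit. Unset Printing Implicit Defensive.

Section Reach.
Variable I : Type.
Implicit Types (f g : I -> option I).

Definition reach f (x y : I) : Prop :=
  exists n, iter n (fun o => obind f o) (Some x) = Some y.
Definition Acyc f : Prop :=
  forall x n, iter n.+1 (fun o => obind f o) (Some x) <> Some x.

Lemma iter_obind_None f n : iter n (fun o => obind f o) None = None.
Proof. by elim: n => //= n ->. Qed.

Lemma reach0 f x : reach f x x.
Proof. by exists 0. Qed.

Lemma reach1 f x y : f x = Some y -> reach f x y.
Proof. by move=> h; exists 1. Qed.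

Lemma reach_trans f x y z : reach f x y -> reach f y z -> reach f x z.
Proof.
case=> n hn [m hm]; exists (m + n); by rewrite iterD hn.
Qed.

Lemma reach_step f x y z : f x = Some y -> reach f y z -> reach f x z.
Proof. by move/reach1; apply: reach_trans. Qed.

Lemma iterSr_ob f n x y : f x = Some y ->
  iter n.+1 (fun o => obind f o) (Some x) = iter n (fun o => obind f o) (Some y).
Proof. by move=> h; rewrite iterSr /= h. Qed.

Lemma reach_mono f g : (forall z t, f z = Some t -> reach g z t) ->
  forall x y, reach f x y -> reach g x y.
Proof.
move=> H x y [n]; elim: n y => [|n IH] y /=; first by case=> ->; apply: reach0.
case E: (iter n _ _) => [z|] //= fz.
exact: reach_trans (IH z E) (H _ _ fz).
Qed.

Lemma reach_ext f g x y : (forall z, f z = g z) -> reach f x y -> reach g x y.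
Proof.
move=> H; apply: reach_mono => z t fz; apply: reach1; by rewrite -H.
Qed.

Lemma reach_total f x y1 y2 : reach f x y1 -> reach f x y2 ->
  reach f y1 y2 \/ reach f y2 y1.
Proof.
case=> n1 h1 [n2 h2]; case: (leqP n1 n2) => hle.
- left; exists (n2 - n1); by rewrite -h1 -iterD subnK.
- right; exists (n1 - n2); rewrite -h2 -iterD subnK //; exact: ltnW.
Qed.

Lemma cycle_of f x y : x <> y -> reach f x y -> reach f y x -> ~ Acyc f.
Proof.
move=> nxy [n hn] [m hm] Ac; case: n hn => [|n] hn; first by case: hn.
apply: (Ac y (n + m)); by rewrite -addSn iterD hm hn.
Qed.

Lemma same_succ f r m T : Acyc f -> f r = Some T -> f m = Some T -> r <> m ->
  reach f r m -> False.
Proof.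
move=> Ac fr fm nrm [n hn]; case: n hn => [|n] hn; first by case: hn.
rewrite (iterSr_ob _ fr) in hn.
by apply: (Ac T n); rewrite iterS hn /= fm.
Qed.

Lemma reach_two_succ f x r m T : Acyc f -> f r = Some T -> f m = Some T -> r <> m ->
  reach f x r -> reach f x m -> False.
Proof.
move=> Ac fr fm nrm hr hm; case: (reach_total hr hm) => h.
- exact: (same_succ Ac fr fm nrm h).
- by apply: (same_succ Ac fm fr) => // e; apply: nrm.
Qed.

Lemma reach_back f x y : Acyc f -> f y = Some x -> reach f x y -> False.
Proof.
move=> Ac fy [n hn]; apply: (Ac x n); by rewrite iterS hn /= fy.
Qed.

Section Change.
Variables (f g : I -> option I) (D : I -> Prop).
Hypothesis H1 : forall z, ~ D z -> g z = f z.

Lemma same_chain t : (forall z, D z -> ~ reach f t z) ->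
  forall n, iter n (fun o => obind g o) (Some t) = iter n (fun o => obind f o) (Some t).
Proof.
move=> HR; elim=> [|n IH] //=; rewrite IH.
case E: (iter n _ _) => [z|] //=; apply: H1 => Dz.
by apply: (HR z Dz); exists n.
Qed.

Lemma reach_same t y : (forall z, D z -> ~ reach f t z) -> reach f t y -> reach g t y.
Proof. by move=> HR [n hn]; exists n; rewrite same_chain. Qed.

Lemma chain_hit x n : iter n (fun o => obind g o) (Some x) = iter n (fun o => obind f o) (Some x)
  \/ exists j z, iter j (fun o => obind g o) (Some x) = Some z /\ D z.
Proof.
elim: n => [|n IH] /=; first by left.
case: IH => [IH|]; last by right.
rewrite IH; case E: (iter n (fun o => obind f o) _) => [z|] /=; last by left.
case: (classic (D z)) => Dz; last by left; rewrite H1.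
by right; exists n, z; rewrite IH E.
Qed.

Lemma rotate x z n j : iter n.+1 (fun o => obind g o) (Some x) = Some x ->
  iter j (fun o => obind g o) (Some x) = Some z ->
  iter n.+1 (fun o => obind g o) (Some z) = Some z.
Proof. by move=> hc hj; rewrite -hj -iterD addnC iterD hc. Qed.

Lemma acyc_change T : Acyc f -> (forall z, D z -> ~ reach f T z) ->
  (forall z n, D z -> iter n.+1 (fun o => obind g o) (Some z) = Some z ->
     exists m, iter m (fun o => obind g o) (Some T) = Some z) -> Acyc g.
Proof.
move=> Ac HR HT x n hc.
case: (chain_hit x n.+1) => [e|[j [z [hj Dz]]]].
  by apply: (Ac x n); rewrite -e.
have hz := rotate hc hj.
case: (HT z n Dz hz) => m hm.
apply: (HR z Dz); exists m; by rewrite -(same_chain HR).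
Qed.

End Change.

Lemma not_reach_fresh f x a : (forall y, f y <> Some a) -> x <> a -> ~ reach f x a.
Proof.
move=> Hf nxa [n]; case: n => [|n] /=; first by case.
case: (iter n _ _) => //= y; exact: Hf.
Qed.

(* insertion of a fresh node a in front of T0 *)
Lemma insert_lemma f g (a T0 : I) (M : I -> Prop) : Acyc f ->
  f a = None -> (forall y, f y <> Some a) -> T0 <> a -> g a = Some T0 ->
  (forall z, M z -> [/\ z <> a, f z = Some T0 & g z = Some a]) ->
  (forall z, z <> a -> ~ M z -> g z = f z) ->
  Acyc g /\ (forall x y, reach f x y -> reach g x y).
Proof.
move=> Ac fa fna nT ga HM Hother.
pose D z := z = a \/ M z.
have H1 : forall z, ~ D z -> g z = f z.
  move=> z nD; apply: Hother => [e|m]; apply: nD; by [left|right].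
split.
- apply: (acyc_change (f:=f) (g:=g) (D:=D) H1 (T:=T0) Ac).
  + move=> z [->|Mz]; first exact: not_reach_fresh.
    case: (HM z Mz) => _ fz _; exact: reach_back fz.
  + move=> z n [->|Mz] hz; first by exists n; rewrite -(iterSr_ob _ ga).
    case: (HM z Mz) => nza _ gz.
    rewrite (iterSr_ob _ gz) in hz; case: n hz => [|n] hz; first by case: hz => e; case: nza.
    by exists n; rewrite -(iterSr_ob _ ga).
- apply: reach_mono => z t fz.
  case: (classic (M z)) => [Mz|nM].
    case: (HM z Mz) => _ fz' gz; move: fz; rewrite fz' => -[<-].
    exact: reach_step gz (reach1 ga).
  have za : z <> a by move=> e; move: fz; rewrite e fa.
  by apply: reach1; rewrite Hother.
Qed.

(* redirection of the nodes in M from T1 to T, where T reaches r and r -> T1 *)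
Lemma redirect_lemma f g (r T1 T : I) (M : I -> Prop) : Acyc f ->
  f r = Some T1 -> g r = Some T1 -> reach f T r ->
  (forall z, M z -> [/\ z <> r, f z = Some T1 & g z = Some T]) ->
  (forall z, z <> r -> ~ M z -> g z = f z) ->
  [/\ Acyc g, (forall x y, reach f x y -> reach g x y) & reach g T r].
Proof.
move=> Ac fr gr hT HM Hother.
have H1 : forall z, ~ M z -> g z = f z.
  move=> z nM; case: (classic (z = r)) => [->|nzr]; first by rewrite fr gr.
  exact: Hother.
have HR : forall z, M z -> ~ reach f T z.
  move=> z Mz hz; case: (HM z Mz) => nzr fz _.
  exact: (reach_two_succ Ac fr fz (fun e => nzr (esym e)) hT hz).
have hTr : reach g T r := reach_same H1 HR hT.
split => //.
- apply: (acyc_change (f:=f) (g:=g) (D:=M) H1 (T:=T) Ac HR) => z n Mz hz.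
  case: (HM z Mz) => _ _ gz; rewrite (iterSr_ob _ gz) in hz; by exists n.
- apply: reach_mono => z t fz.
  case: (classic (M z)) => [Mz|nM]; last by apply: reach1; rewrite H1.
  case: (HM z Mz) => _ fz' gz; move: fz; rewrite fz' => -[<-].
  exact: reach_step gz (reach_trans hTr (reach1 gr)).
Qed.

End Reach.

Section Sink.
Variable V : finType.
Implicit Types (L : V -> V) (v x y z : V).

Definition sk L v := iter #|V| L v.
Definition fixr L v z := exists n, iter n L v = z /\ L z = z.
Definition WT L := forall v, exists z, fixr L v z.
Definition passes L v x := exists n, iter n L v = x.

Lemma iter_fix L z n : L z = z -> iter n L z = z.
Proof. by move=> h; elim: n => //= n ->. Qed.

Lemma iter_period L v i p : iter (i + p) L v = iter i L v ->
  forall t, iter (i + t * p) L v = iter i L v.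
Proof.
move=> h; elim=> [|t IH]; first by rewrite mul0n addn0.
by rewrite mulSn addnA (addnC i) -addnA iterD IH -iterD addnC h.
Qed.

Lemma iter_card L v z : fixr L v z -> sk L v = z.
Proof.
case=> n [hn hz]; rewrite /sk.
case: (leqP n #|V|) => hle.
  by rewrite -(subnK hle) iterD hn iter_fix.
have nu : ~~ uniq (traject L v #|V|.+1).
  apply/negP => /card_uniqP; rewrite size_traject => e.
  by have := max_card (mem (traject L v #|V|.+1)); rewrite e ltnn.
case/(uniqPn v): nu => i [j [lij]].
rewrite size_traject => ljV.
rewrite (nth_traject _ (ltn_trans lij ljV)) (nth_traject _ ljV) => eij.
have hp : iter (i + (j - i)) L v = iter i L v by rewrite subnKC // ltnW.
have := iter_period hp n.
have hnle : n <= i + n * (j - i).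
  apply: leq_trans (leq_addl _ _); rewrite -{1}(muln1 n) leq_mul2l.
  by rewrite subn_gt0 lij orbT.
rewrite -(subnK hnle) iterD hn iter_fix // => ei.
have hi : i <= #|V| by rewrite -ltnS (ltn_trans lij).
by rewrite -(subnK hi) iterD -ei iter_fix.
Qed.
Lemma sk_fix L v : WT L -> L (sk L v) = sk L v /\ fixr L v (sk L v).
Proof.
move=> W; case: (W v) => z hz; rewrite (iter_card hz); split => //; by case: hz => n [].
Qed.

Lemma sk_fixed L z : L z = z -> sk L z = z.
Proof. by move=> h; apply: iter_card; exists 0. Qed.

Lemma passes_sk L v x : WT L -> passes L v x -> sk L v = sk L x.
Proof.
move=> W [n hn]; apply: iter_card; case: (sk_fix x W) => h [m [hm _]].
by exists (m + n); rewrite iterD hn hm.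
Qed.

Lemma passes1 L v : passes L v (L v). Proof. by exists 1. Qed.

Lemma no_return L x : WT L -> L x != x -> ~ passes L (L x) x.
Proof.
move=> W nx [n hn]; case: (W x) => z [m [hm hz]].
have hp : iter (0 + n.+1) L x = iter 0 L x by rewrite add0n iterSr.
have := iter_period hp m; rewrite add0n /= => e.
have hle : m <= m * n.+1 by rewrite -{1}(muln1 m) leq_mul2l ltn0Sn orbT.
move: e; rewrite -(subnK hle) iterD hm iter_fix // => ezx.
by move: nx; rewrite -ezx hz eqxx.
Qed.

Lemma iter_upd_out L x y v n : ~ passes L v x -> iter n (upd L x y) v = iter n L v.
Proof.
move=> np; elim: n => //= n ->; rewrite /upd.
case: eqP => // e; by case: np; exists n.
Qed.

Lemma sk_upd_out L x y v : ~ passes L v x -> sk (upd L x y) v = sk L v.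
Proof. exact: iter_upd_out. Qed.

Lemma passes_min L v x : passes L v x ->
  exists n, iter n L v = x /\ forall j, j < n -> iter j L v <> x.
Proof.
move=> hp.
have ex : exists n, iter n L v == x by case: hp => n hn; exists n; apply/eqP.
exists (ex_minn ex); case: ex_minnP => n /eqP hn hmin; split => // j hj e.
by have := hmin j (introT eqP e); rewrite leqNgt hj.
Qed.

Lemma iter_upd_in L x y v : passes L v x ->
  exists n, iter n (upd L x y) v = x.
Proof.
case/passes_min => n [hn hmin]; exists n.
suff : forall j, j <= n -> iter j (upd L x y) v = iter j L v by move/(_ n (leqnn n)) ->.
elim=> [|j IH] hj //=; rewrite IH ?(ltnW hj) // /upd; case: eqP => // e.
by case: (hmin j hj).
Qed.

Lemma upd_at L x y : upd L x y x = y.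
Proof. by rewrite /upd eqxx. Qed.

Lemma upd_ne L x y z : z != x -> upd L x y z = L z.
Proof. by rewrite /upd => /negbTE ->. Qed.

Lemma sk_upd_in_self L x v : passes L v x -> sk (upd L x x) v = x.
Proof.
move=> hp; case: (iter_upd_in x hp) => n hn; apply: iter_card; exists n.
by rewrite hn upd_at.
Qed.

Lemma sk_upd_in L x y v : WT L -> ~ passes L y x -> passes L v x ->
  sk (upd L x y) v = sk L y.
Proof.
move=> W npy hp; case: (iter_upd_in y hp) => n hn; apply: iter_card.
case: (sk_fix y W) => hf [m [hm _]].
have nx : sk L y != x by apply/eqP => e; apply: npy; exists m; rewrite hm.
exists (m + n.+1); split; last by rewrite upd_ne.
by rewrite iterD iterS hn upd_at iter_upd_out.
Qed.

Lemma WT_upd_self L x : WT L -> WT (upd L x x).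
Proof.
move=> W v; case: (classic (passes L v x)) => [hp|np].
- case: (iter_upd_in x hp) => m hm; exists x, m; by rewrite hm upd_at.
- case: (sk_fix v W) => hf [m [hm _]]; exists (sk L v), m.
  have nx : sk L v != x by apply/eqP => e; apply: np; exists m; rewrite hm.
  by rewrite iter_upd_out // upd_ne.
Qed.

Lemma WT_upd L x y : WT L -> ~ passes L y x -> WT (upd L x y).
Proof.
move=> W npy v; case: (classic (passes L v x)) => [hp|np].
- exists (sk L y).
  case: (iter_upd_in y hp) => n hn; case: (sk_fix y W) => hf [m [hm _]].
  have nx : sk L y != x by apply/eqP => e; apply: npy; exists m; rewrite hm.
  exists (m + n.+1); split; last by rewrite upd_ne.
  by rewrite iterD iterS hn upd_at iter_upd_out.
- case: (sk_fix v W) => hf [m [hm _]]; exists (sk L v), m.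
  have nx : sk L v != x by apply/eqP => e; apply: np; exists m; rewrite hm.
  by rewrite iter_upd_out // upd_ne.
Qed.

End Sink.

Lemma upd_at' (T : eqType) (U : Type) (f : T -> U) x y : upd f x y x = y.
Proof. by rewrite /upd eqxx. Qed.
Lemma upd_ne' (T : eqType) (U : Type) (f : T -> U) x y z : z != x -> upd f x y z = f z.
Proof. by rewrite /upd => /negbTE ->. Qed.

Section Proto.
Variables (R : realFieldType) (V I : finType) (adj : rel V) (d : I) (rv : I -> V).
Hypotheses (adj_sym : symmetric adj) (adj_irr : irreflexive adj).
Notation st := (state V I R).

Definition N (s : st) (r : I) : option I :=
  if transit s r is Some (w, u, _) then Some (lastreq s (sk (lnk s) u)) else predq s r.

Definition gstep (s : st) (g : V -> I) (e : event I) : V -> I :=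
  match e with
  | Issue a => upd g (rv a) a
  | Deliver a => if transit s a is Some (_, u, _) then upd g u a else g
  end.

Record Inv (s : st) (g : V -> I) (isd : I -> bool) : Prop := {
  iWT : WT (lnk s);
  iAL : forall v, lnk s v != v -> adj v (lnk s v);
  iAT : forall r w u ts, transit s r = Some (w, u, ts) -> adj w u;
  iUn : forall r, ~~ isd r -> [/\ transit s r = None, predq s r = None,
          (forall z, predq s z <> Some r) & (forall v, lastreq s v <> r)];
  iSL : forall z, lnk s z = z -> rv (lastreq s z) = z;
  iA : forall r w u ts, transit s r = Some (w, u, ts) ->
         reach (N s) (lastreq s (sk (lnk s) w)) r;
  iT : forall v, reach (N s) (lastreq s (sk (lnk s) v)) (g v);
  iAc : Acyc (N s) }.

Definition StepOK s g s' g' isd' :=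
  [/\ Inv s' g' isd', (forall x y, reach (N s) x y -> reach (N s') x y) &
      (forall v, reach (N s') (g' v) (g v))].

Lemma case_issue_sink s g isd t a : Inv s g isd -> ~~ isd a -> lnk s (rv a) = rv a ->
  StepOK s g (step rv t s (Issue a)) (gstep s g (Issue a)) (fun r => isd r || (r == a)).
Proof.
move=> [W AL AT Un SL A T Ac] na hv.
have [tra pqa pqna lrna] := Un a na.
rewrite /step /gstep; set v := rv a in hv *; rewrite hv eqxx.
set lr := lastreq s; set L := lnk s.
set s' := State _ _ _ _.
have fa : N s a = None by rewrite /N tra pqa.
have fna : forall y, N s y <> Some a.
  move=> y; rewrite /N; case: (transit s y) => [[[w u] ts]|]; last exact: pqna.
  by case=> /lrna.
pose M z := z <> a /\ exists w x ts, transit s z = Some (w, x, ts) /\ sk L x = v.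
have ga : N s' a = Some (lr v) by rewrite /N /= tra upd_at'.
have HM : forall z, M z -> [/\ z <> a, N s z = Some (lr v) & N s' z = Some a].
  move=> z [nza [w [x [ts [tz sx]]]]]; split => //.
    by rewrite /N tz sx.
  by rewrite /N /= tz sx upd_at'.
have Hother : forall z, z <> a -> ~ M z -> N s' z = N s z.
  move=> z nza nM; rewrite /N /=; case tz: (transit s z) => [[[w x] ts]|].
    rewrite upd_ne' //; apply/eqP => sx; apply: nM; split => //; by exists w, x, ts.
  by rewrite upd_ne' //; apply/eqP.
have [Ac' mono] := insert_lemma Ac fa fna (fun e => lrna v e) ga HM Hother.
have Key : forall y, reach (N s') (lastreq s' (sk (lnk s') y)) (lr (sk L y)).
  move=> y /=; case: (eqVneq (sk L y) v) => [e|ne].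
    by rewrite e upd_at'; apply: reach1.
  rewrite upd_ne' //; exact: reach0.
have skv : sk L v = v by apply: sk_fixed.
split => //.
- split => //=.
  + move=> r; rewrite negb_or => /andP [nr nra].
    have [tr pr pzr lr'] := Un r nr; split => //.
    * by rewrite upd_ne'.
    * move=> z; case: (eqVneq z a) => [->|nz]; first by rewrite upd_at' => -[/lr'].
      by rewrite upd_ne' //; apply: pzr.
    * move=> y; case: (eqVneq y v) => [->|ny]; first by rewrite upd_at' => e; rewrite e eqxx in nra.
      by rewrite upd_ne' //; apply: lr'.
  + move=> z hz; case: (eqVneq z v) => [->|nz]; first by rewrite upd_at'.
    by rewrite upd_ne' //; apply: SL.
  + move=> r w u ts hr; exact: (reach_trans (Key w) (mono _ _ (A _ _ _ _ hr))).
  + move=> y; case: (eqVneq y v) => [->|ny].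
      by rewrite upd_at' skv upd_at'; apply: reach0.
    rewrite (upd_ne' g) //; exact: (reach_trans (Key y) (mono _ _ (T y))).
- move=> y; case: (eqVneq y v) => [->|ny]; last by rewrite upd_ne' //; apply: reach0.
  rewrite upd_at'; apply: reach_step ga _; apply: mono; by rewrite -{1}skv.
Qed.


Lemma case_issue_fwd s g isd t a : Inv s g isd -> ~~ isd a -> lnk s (rv a) != rv a ->
  StepOK s g (step rv t s (Issue a)) (gstep s g (Issue a)) (fun r => isd r || (r == a)).
Proof.
move=> [W AL AT Un SL A T Ac] na hv.
have [tra pqa pqna lrna] := Un a na.
rewrite /step /gstep; set v := rv a in hv *; rewrite (negbTE hv).
set lr := lastreq s; set L := lnk s.
set s' := State _ _ _ _.
have np1 : ~ passes L (L v) v := no_return W hv.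
have sk1 : sk L (L v) = sk L v := esym (passes_sk W (passes1 L v)).
have skyne : forall y, sk L y != v.
  move=> y; apply/eqP => e; have := (sk_fix y W).1; rewrite e => e'.
  by rewrite e' eqxx in hv.
have fa : N s a = None by rewrite /N tra pqa.
have fna : forall y, N s y <> Some a.
  move=> y; rewrite /N; case: (transit s y) => [[[w u] ts]|]; last exact: pqna.
  by case=> /lrna.
pose M z := z <> a /\ exists w x ts, transit s z = Some (w, x, ts) /\ passes L x v.
have ga : N s' a = Some (lr (sk L v)).
  rewrite /N /= upd_at' (sk_upd_out _ np1) sk1 upd_ne' //.
have HM : forall z, M z -> [/\ z <> a, N s z = Some (lr (sk L v)) & N s' z = Some a].
  move=> z [nza [w [x [ts [tz px]]]]]; split => //.
    by rewrite /N tz (passes_sk W px).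
  by rewrite /N /= upd_ne' ?tz; [rewrite (sk_upd_in_self px) upd_at' | apply/eqP].
have Hother : forall z, z <> a -> ~ M z -> N s' z = N s z.
  move=> z nza nM; rewrite /N /= upd_ne'; last by apply/eqP.
  case tz: (transit s z) => [[[w x] ts]|] //.
  have npx : ~ passes L x v by move=> px; apply: nM; split => //; exists w, x, ts.
  by rewrite (sk_upd_out _ npx) upd_ne'.
have [Ac' mono] := insert_lemma Ac fa fna (fun e => lrna _ e) ga HM Hother.
have Key : forall y, reach (N s') (lastreq s' (sk (lnk s') y)) (lr (sk L y)).
  move=> y /=; case: (classic (passes L y v)) => [py|npy].
    by rewrite (sk_upd_in_self py) upd_at' (passes_sk W py); apply: reach1.
  rewrite (sk_upd_out _ npy) upd_ne' //; exact: reach0.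
have skv' : sk (upd L v v) v = v by apply: sk_upd_in_self; exists 0.
split => //.
- split => //=.
  + exact: WT_upd_self.
  + move=> y; case: (eqVneq y v) => [->|ny]; first by rewrite upd_at' eqxx.
    rewrite upd_ne' //; exact: AL.
  + move=> r w u ts; case: (eqVneq r a) => [->|nr].
      by rewrite upd_at' => -[<- <- _]; apply: AL.
    rewrite upd_ne' //; exact: AT.
  + move=> r; rewrite negb_or => /andP [nr nra].
    have [tr pr pzr lr'] := Un r nr; split => //.
    * by rewrite upd_ne'.
    * move=> y; case: (eqVneq y v) => [->|ny]; first by rewrite upd_at' => e; rewrite e eqxx in nra.
      by rewrite upd_ne' //; apply: lr'.
  + move=> z; case: (eqVneq z v) => [->|nz]; first by rewrite !upd_at'.
    rewrite !upd_ne' //; exact: SL.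
  + move=> r w u ts; case: (eqVneq r a) => [->|nr].
      rewrite upd_at' => -[<- _ _]; rewrite skv' upd_at'; exact: reach0.
    rewrite upd_ne' // => hr; exact: (reach_trans (Key w) (mono _ _ (A _ _ _ _ hr))).
  + move=> y; case: (eqVneq y v) => [->|ny].
      by rewrite skv' !upd_at'; apply: reach0.
    rewrite (upd_ne' g) //; exact: (reach_trans (Key y) (mono _ _ (T y))).
- move=> y; case: (eqVneq y v) => [->|ny]; last by rewrite upd_ne' //; apply: reach0.
  rewrite upd_at'; apply: reach_step ga _; exact: mono (T v).
Qed.


Lemma case_deliver_sink s g isd t a w u ts : Inv s g isd ->
  transit s a = Some (w, u, ts) -> lnk s u = u ->
  StepOK s g (step rv t s (Deliver a)) (gstep s g (Deliver a)) isd.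
Proof.
move=> [W AL AT Un SL A T Ac] ha hu.
rewrite /step /gstep ha hu eqxx.
set lr := lastreq s; set L := lnk s.
set s' := State _ _ _ _.
have adjwu := AT _ _ _ _ ha.
have nwu : w != u by apply/eqP => e; rewrite e adj_irr in adjwu.
have sku : sk L u = u by apply: sk_fixed.
have fr : N s a = Some (lr u) by rewrite /N ha sku.
have hA := A _ _ _ _ ha.
have npw : ~ passes L w u.
  move=> pw; move: hA; rewrite (passes_sk W pw) sku => hA.
  exact: reach_back Ac fr hA.
have gr : N s' a = Some (lr u) by rewrite /N /= !upd_at'.
pose M z := z <> a /\ exists w' x ts', transit s z = Some (w', x, ts') /\ passes L x u.
have HM : forall z, M z -> [/\ z <> a, N s z = Some (lr u) & N s' z = Some (lr (sk L w))].
  move=> z [nza [w' [x [ts' [tz px]]]]]; split => //.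
    by rewrite /N tz (passes_sk W px) sku.
  rewrite /N /= upd_ne' ?tz; last by apply/eqP.
  by rewrite (sk_upd_in W npw px).
have Hother : forall z, z <> a -> ~ M z -> N s' z = N s z.
  move=> z nza nM; rewrite /N /= upd_ne'; last by apply/eqP.
  case tz: (transit s z) => [[[w' x] ts']|]; last by rewrite upd_ne' //; apply/eqP.
  have npx : ~ passes L x u by move=> px; apply: nM; split => //; exists w', x, ts'.
  by rewrite (sk_upd_out _ npx).
have [Ac' mono hTr] := redirect_lemma Ac fr gr hA HM Hother.
have Key : forall y, reach (N s') (lastreq s' (sk (lnk s') y)) (lr (sk L y)).
  move=> y /=; case: (classic (passes L y u)) => [py|npy].
    rewrite (sk_upd_in W npw py) (passes_sk W py) sku.
    exact: reach_trans hTr (reach1 gr).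
  rewrite (sk_upd_out _ npy); exact: reach0.
have sku' : sk (upd L u w) u = sk L w by apply: sk_upd_in => //; exists 0.
have ina : isd a by apply/negPn/negP => /Un [e _ _ _]; rewrite e in ha.
split => //.
- split => //=.
  + exact: WT_upd.
  + move=> y; case: (eqVneq y u) => [->|ny]; first by rewrite upd_at' adj_sym.
    rewrite upd_ne' //; exact: AL.
  + move=> r w' u' ts'; case: (eqVneq r a) => [->|nr]; first by rewrite upd_at'.
    rewrite upd_ne' //; exact: AT.
  + move=> r nr; have [tr pr pzr lr'] := Un r nr.
    have nra : r != a by apply/eqP => e; rewrite e ina in nr.
    split => //; first by rewrite upd_ne'.
    * by rewrite upd_ne'.
    * move=> z; case: (eqVneq z a) => [->|nz]; first by rewrite upd_at' => -[/lr'].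
      by rewrite upd_ne' //; apply: pzr.
  + move=> z; case: (eqVneq z u) => [->|nz]; first by rewrite upd_at' => e; rewrite e eqxx in nwu.
    rewrite upd_ne' //; exact: SL.
  + move=> r w' u' ts'; case: (eqVneq r a) => [->|nr]; first by rewrite upd_at'.
    rewrite upd_ne' // => hr; exact: (reach_trans (Key w') (mono _ _ (A _ _ _ _ hr))).
  + move=> y; case: (eqVneq y u) => [->|ny]; first by rewrite sku' upd_at'.
    rewrite (upd_ne' g) //; exact: (reach_trans (Key y) (mono _ _ (T y))).
- move=> y; case: (eqVneq y u) => [->|ny]; last by rewrite upd_ne' //; apply: reach0.
  rewrite upd_at'; apply: reach_step gr _; apply: mono; have := T u; by rewrite sku.
Qed.

Lemma case_deliver_fwd s g isd t a w u ts : Inv s g isd ->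
  transit s a = Some (w, u, ts) -> lnk s u != u ->
  StepOK s g (step rv t s (Deliver a)) (gstep s g (Deliver a)) isd.
Proof.
move=> [W AL AT Un SL A T Ac] ha hu.
rewrite /step /gstep ha (negbTE hu).
set lr := lastreq s; set L := lnk s.
set s' := State _ _ _ _.
have adjwu := AT _ _ _ _ ha.
have nwu : w != u by apply/eqP => e; rewrite e adj_irr in adjwu.
have fr : N s a = Some (lr (sk L u)) by rewrite /N ha.
have hA := A _ _ _ _ ha.
have npw : ~ passes L w u.
  move=> pw; move: hA; rewrite (passes_sk W pw) => hA.
  exact: reach_back Ac fr hA.
have npu : ~ passes L (L u) u := no_return W hu.
have sk1 : sk L (L u) = sk L u := esym (passes_sk W (passes1 L u)).
have gr : N s' a = Some (lr (sk L u)).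
  by rewrite /N /= !upd_at' (sk_upd_out _ npu) sk1.
pose M z := z <> a /\ exists w' x ts', transit s z = Some (w', x, ts') /\ passes L x u.
have HM : forall z, M z -> [/\ z <> a, N s z = Some (lr (sk L u)) & N s' z = Some (lr (sk L w))].
  move=> z [nza [w' [x [ts' [tz px]]]]]; split => //.
    by rewrite /N tz (passes_sk W px).
  have nz : z != a by apply/eqP.
  by rewrite /N /= !upd_ne' // tz (sk_upd_in W npw px).
have Hother : forall z, z <> a -> ~ M z -> N s' z = N s z.
  move=> z nza nM; have nz : z != a by apply/eqP.
  rewrite /N /= !upd_ne' //.
  case tz: (transit s z) => [[[w' x] ts']|] //.
  have npx : ~ passes L x u by move=> px; apply: nM; split => //; exists w', x, ts'.
  by rewrite (sk_upd_out _ npx).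
have [Ac' mono hTr] := redirect_lemma Ac fr gr hA HM Hother.
have Key : forall y, reach (N s') (lastreq s' (sk (lnk s') y)) (lr (sk L y)).
  move=> y /=; case: (classic (passes L y u)) => [py|npy].
    rewrite (sk_upd_in W npw py) (passes_sk W py).
    exact: reach_trans hTr (reach1 gr).
  rewrite (sk_upd_out _ npy); exact: reach0.
have sku' : sk (upd L u w) u = sk L w by apply: sk_upd_in => //; exists 0.
have ina : isd a by apply/negPn/negP => /Un [e _ _ _]; rewrite e in ha.
split => //.
- split => //=.
  + exact: WT_upd.
  + move=> y; case: (eqVneq y u) => [->|ny]; first by rewrite upd_at' adj_sym.
    rewrite upd_ne' //; exact: AL.
  + move=> r w' u' ts'; case: (eqVneq r a) => [->|nr].
      by rewrite upd_at' => -[<- <- _]; apply: AL.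
    rewrite !upd_ne' //; exact: AT.
  + move=> r nr; have [tr pr pzr lr'] := Un r nr.
    have nra : r != a by apply/eqP => e; rewrite e ina in nr.
    by split => //; rewrite !upd_ne'.
  + move=> z; case: (eqVneq z u) => [->|nz]; first by rewrite upd_at' => e; rewrite e eqxx in nwu.
    rewrite upd_ne' //; exact: SL.
  + move=> r w' u' ts'; case: (eqVneq r a) => [->|nr].
      by rewrite upd_at' => -[<- _ _]; rewrite sku'.
    rewrite !upd_ne' // => hr; exact: (reach_trans (Key w') (mono _ _ (A _ _ _ _ hr))).
  + move=> y; case: (eqVneq y u) => [->|ny]; first by rewrite sku' upd_at'.
    rewrite (upd_ne' g) //; exact: (reach_trans (Key y) (mono _ _ (T y))).
- move=> y; case: (eqVneq y u) => [->|ny]; last by rewrite upd_ne' //; apply: reach0.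
  rewrite upd_at'; apply: reach_step gr _; exact: mono (T u).
Qed.

End Proto.

Lemma run_ok_nth (V I : eqType) (R : numDomainType) (d : I) (rv : I -> V)
    (rt : I -> R) (wt : V -> V -> R) (dflt : R * event I) es : forall s t0,
  run_ok d rv rt wt s t0 es ->
  (forall k, (k < size es)%N ->
     event_ok d rt wt (state_after rv s (take k es)) (nth dflt es k).1 (nth dflt es k).2) /\
  (forall a, transit (state_after rv s es) a = None).
Proof.
elim: es => [|[t e] es IH] s t0 /=; first by move=> h; split.
case=> _ ok rest; have [IH1 IH2] := IH _ _ rest; split => //.
by case=> [|k] //= hk; apply: IH1.
Qed.

Section Exec.
Variables (R : realFieldType) (V : finType) (adj : rel V) (wt : V -> V -> R)
    (v0 : V) (I : finType) (d : I) (rv : I -> V) (rt : I -> R) (link0 : V -> V)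
    (es : seq (R * event I)).
Hypotheses (Htree : is_tree adj) (Hd : rv d = v0)
    (Hinit : init_links adj v0 link0) (Hexec : arrow_execution d rv rt wt link0 es).

Let s0 : state V I R := init_state R link0 d.
Definition sA k := state_after rv s0 (take k es).
Let dflt : R * event I := (0%R, Issue d).
Fixpoint tg (k : nat) : V -> I :=
  if k is k'.+1 then gstep rv (sA k') (tg k') (nth dflt es k').2 else fun _ => d.
Definition isdk k (r : I) := (r == d) || has (fun te => is_issue_of r te.2) (take k es).

Lemma adj_sym : symmetric adj. Proof. by case: Htree. Qed.
Lemma adj_irr : irreflexive adj. Proof. by case: Htree. Qed.

Lemma sA_step k : (k < size es)%N -> sA k.+1 = step rv (nth dflt es k).1 (sA k) (nth dflt es k).2.
Proof. by move=> hk; rewrite /sA (take_nth dflt hk) /state_after foldl_rcons. Qed.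

Lemma ev_ok k : (k < size es)%N ->
  event_ok d rt wt (sA k) (nth dflt es k).1 (nth dflt es k).2.
Proof. by case: Hexec => h _ hk; have [h1 _] := run_ok_nth dflt h; apply: h1. Qed.

Lemma final_transit a : transit (sA (size es)) a = None.
Proof.
case: Hexec => h _; have [_ h2] := run_ok_nth dflt h; by rewrite /sA take_size.
Qed.

Lemma issue_fresh k a : (k < size es)%N -> (nth dflt es k).2 = Issue a -> ~~ isdk k a.
Proof.
move=> hk he; case: Hexec => h hc.
have ok := ev_ok hk; rewrite he in ok; case: ok => nad _.
have := hc a nad; rewrite -(cat_take_drop k es) count_cat (drop_nth dflt hk) /= he /= eqxx.
rewrite /isdk (negbTE nad) /= has_count -leqNgt => e.
move: e; set c := count _ (take k es); move=> e; lia.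
Qed.


Lemma init_fixr u : fixr link0 u v0.
Proof.
case: Hinit => h0 hl; case: Htree => _ _ _ uniqP.
suff H : forall n u p, (size p <= n)%N -> path adj u p -> last u p = v0 -> uniq (u :: p) ->
  fixr link0 u v0.
  case: (eqVneq u v0) => [->|nu]; first by exists 0.
  have [a1 [p0 [hp0 hl0 hu0]]] := hl u nu.
  apply: (H (size (link0 u :: p0)) u (link0 u :: p0)) => //=.
  by rewrite a1.
elim=> [|n IH] {}u p hs hp hlast hu.
  by case: p hs hp hlast hu => // _ _ /= ->; exists 0.
case: (eqVneq u v0) => [->|nu]; first by exists 0.
have [a1 [p0 [hp0 hl0 hu0]]] := hl u nu.
have e : p = link0 u :: p0.
  apply: (uniqP u) => //=; by rewrite ?a1 ?hlast.
move: hs; rewrite e /= ltnS => hs.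
have [m [hm hf]] : fixr link0 (link0 u) v0.
  apply: (IH _ p0) => //; by case/andP: hu0.
by exists m.+1; rewrite iterSr.
Qed.

Lemma Inv_ext (s : state V I R) g isd isd' : (forall r, isd r = isd' r) -> Inv adj rv s g isd -> Inv adj rv s g isd'.
Proof.
move=> e [W AL AT Un SL A T Ac]; split => // r; rewrite -e; exact: Un.
Qed.

Lemma StepOK_ext (s s' : state V I R) g g' isd isd' : (forall r, isd r = isd' r) ->
  StepOK adj rv s g s' g' isd -> StepOK adj rv s g s' g' isd'.
Proof. by move=> e [h1 h2 h3]; split => //; apply: Inv_ext h1. Qed.

Lemma init_inv : Inv adj rv (sA 0) (tg 0) (isdk 0).
Proof.
have hN : forall z, N (sA 0) z = None by move=> z; rewrite /N /sA take0.
rewrite /sA take0 /= in hN *.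
split => //=.
- move=> v; exists v0; exact: init_fixr.
- move=> v nv; case: Hinit => h0 hl; case: (eqVneq v v0) => [e|ne].
    by rewrite e h0 eqxx in nv.
  by case: (hl v ne).
- move=> r; rewrite /isdk take0 /= ?orbF => nr; split => // v e.
  by rewrite e eqxx in nr.
- move=> z hz; case: (eqVneq z v0) => [->|ne]; first by [].
  case: Hinit => _ hl; case: (hl z ne) => a1 _; by rewrite hz adj_irr in a1.
- move=> v; exact: reach0.
- move=> x n; rewrite iterSr /= hN iter_obind_None; by [].
Qed.

Lemma isdk_issue k a : (k < size es)%N -> (nth dflt es k).2 = Issue a -> forall r,
  isdk k.+1 r = isdk k r || (r == a).
Proof.
move=> hk he r; rewrite /isdk (take_nth dflt hk) has_rcons he /= (eq_sym r a).
by case: (r == d); case: (a == r); case: (has _ _).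
Qed.

Lemma isdk_deliver k a : (k < size es)%N -> (nth dflt es k).2 = Deliver a -> forall r,
  isdk k.+1 r = isdk k r.
Proof.
by move=> hk he r; rewrite /isdk (take_nth dflt hk) has_rcons he.
Qed.

Lemma step_all k : (k < size es)%N -> Inv adj rv (sA k) (tg k) (isdk k) ->
  StepOK adj rv (sA k) (tg k) (sA k.+1) (tg k.+1) (isdk k.+1).
Proof.
move=> hk hI; rewrite (sA_step hk) /=.
have ok := ev_ok hk.
have fr := @issue_fresh k.
have hi := @isdk_issue k; have hd := @isdk_deliver k.
case: (nth dflt es k) => [t e] in ok fr hi hd *; rewrite /= in ok fr hi hd *.
case: e => a in ok fr hi hd *.
- apply: (StepOK_ext (isd := fun r => isdk k r || (r == a))).
    by move=> r; rewrite (hi a hk erefl).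
  have na := fr a hk erefl.
  case: (eqVneq (lnk (sA k) (rv a)) (rv a)) => h.
  + exact: case_issue_sink.
  + exact: case_issue_fwd.
- apply: (StepOK_ext (isd := isdk k)); first by move=> r; rewrite (hd a hk erefl).
  case: ok => w [u [ts [ha _]]].
  case: (eqVneq (lnk (sA k) u) u) => h.
  + exact: (case_deliver_sink adj_sym adj_irr _ hI ha).
  + exact: (case_deliver_fwd adj_sym adj_irr _ hI ha).
Qed.


Lemma all_inv k : (k <= size es)%N -> Inv adj rv (sA k) (tg k) (isdk k).
Proof.
elim: k => [|k IH] hk; first exact: init_inv.
by have [] := step_all hk (IH (ltnW hk)).
Qed.

Lemma mono_to k j x y : (k <= j)%N -> (j <= size es)%N ->
  reach (N (sA k)) x y -> reach (N (sA j)) x y.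
Proof.
move=> hkj; elim: j hkj => [|j IH] hkj hj.
  by rewrite leqn0 in hkj; rewrite (eqP hkj).
case: (eqVneq k j.+1) => [->//|nk].
have hkj' : (k <= j)%N by rewrite -ltnS ltn_neqAle nk.
move=> h; have [_ mono _] := step_all hj (all_inv (ltnW hj)).
exact: mono (IH hkj' (ltnW hj) h).
Qed.

Lemma visits_tag x u k : visits rv link0 d es x u k -> tg k.+1 u = x.
Proof.
case=> hk; rewrite (drop_nth dflt hk) /=.
case: (nth dflt es k) => t [b|b] /=.
- by case=> -> <-; rewrite upd_at'.
- by case=> -> [w [ts h]]; rewrite -/(sA k) h upd_at'.
Qed.

Lemma tag_chain x u k1 j : visits rv link0 d es x u k1 -> (k1 < j)%N -> (j <= size es)%N ->
  reach (N (sA j)) (tg j u) x.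
Proof.
move=> hv; elim: j => [//|j IH] hkj hj.
case: (eqVneq k1 j) => [<-|nk]; first by rewrite (visits_tag hv); apply: reach0.
have hkj' : (k1 < j)%N by rewrite ltn_neqAle nk -ltnS hkj.
have [_ mono tagm] := step_all hj (all_inv (ltnW hj)).
exact: reach_trans (tagm u) (mono _ _ (IH hkj' (ltnW hj))).
Qed.

Lemma chase x y u k1 k2 : visits rv link0 d es x u k1 -> visits rv link0 d es y u k2 ->
  (k1 < k2)%N -> reach (N (sA (size es))) y x.
Proof.
move=> hx hy hk; have hk2 : (k2 < size es)%N by case: hy.
have h1 := tag_chain hx hk (ltnW hk2).
have [_ mono tagm] := step_all hk2 (all_inv (ltnW hk2)).
have h2 : reach (N (sA k2.+1)) y x.
  by rewrite -(visits_tag hy); exact: reach_trans (tagm u) (mono _ _ h1).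
exact: mono_to hk2 (leqnn _) h2.
Qed.


Definition TrajOK (r : I) (q : seq V) (e : V) :=
  [/\ path adj (rv r) q, last (rv r) q = e &
      forall x, x \in rv r :: q -> exists k', visits rv link0 d es r x k'].

Definition TrajP k :=
  (forall r w u ts, transit (sA k) r = Some (w, u, ts) -> exists q, TrajOK r q w) /\
  (forall r b, predq (sA k) r = Some b -> exists q, TrajOK r q (rv b)).

Lemma traj_start k t a : (k < size es)%N -> nth dflt es k = (t, Issue a) ->
  TrajOK a [::] (rv a).
Proof.
move=> hk E; split => // x; rewrite mem_seq1 => /eqP ->; exists k; split => //.
by rewrite (drop_nth dflt hk) E.
Qed.

Lemma traj_ext k t a w u ts q : (k < size es)%N -> nth dflt es k = (t, Deliver a) ->
  transit (sA k) a = Some (w, u, ts) -> adj w u -> TrajOK a q w -> TrajOK a (rcons q u) u.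
Proof.
move=> hk E ha awu [hp hl hv]; split.
- by rewrite rcons_path hp hl.
- by rewrite last_rcons.
- move=> x; rewrite -rcons_cons mem_rcons in_cons => /orP [/eqP ->|hx]; last exact: hv.
  exists k; split => //; rewrite (drop_nth dflt hk) E /=; split => //; by exists w, ts.
Qed.

Lemma all_traj k : (k <= size es)%N -> TrajP k.
Proof.
elim: k => [|k IH] hk.
  by split => [r w u ts|r b]; rewrite /sA take0.
have [IHt IHp] := IH (ltnW hk).
have [W AL AT Un SL A T Ac] := all_inv (ltnW hk).
have ok := ev_ok hk; have fr := @issue_fresh k.
rewrite /TrajP (sA_step hk).
case E: (nth dflt es k) => [t [a|a]] in ok fr *; rewrite /= in ok fr *.
- have na := fr a hk erefl; have [tra pqa _ _] := Un a na.
  rewrite /step; case: eqP => hv.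
  + split => [r w u ts /= hr|r b /=]; first exact: IHt hr.
    case: (eqVneq r a) => [->|nr]; last by rewrite upd_ne' //; apply: IHp.
    rewrite upd_at' => -[<-]; rewrite (SL _ hv) -hv; exists [::].
    by rewrite hv; exact: traj_start E.
  + split => [r w u ts /=|r b /= hr]; last exact: IHp hr.
    case: (eqVneq r a) => [->|nr]; last by rewrite upd_ne' //; apply: IHt.
    rewrite upd_at' => -[<- _ _]; exists [::]; exact: traj_start E.
- case: ok => w [u [ts [ha _]]].
  have awu := AT _ _ _ _ ha.
  have [q hq] := IHt _ _ _ _ ha.
  have hq' := traj_ext hk E ha awu hq.
  rewrite /step ha; case: eqP => hu.
  + split => [r w' u' ts' /=|r b /=].
      case: (eqVneq r a) => [->|nr]; first by rewrite upd_at'.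
      by rewrite upd_ne' //; apply: IHt.
    case: (eqVneq r a) => [->|nr]; last by rewrite upd_ne' //; apply: IHp.
    by rewrite upd_at' => -[<-]; rewrite (SL _ hu); exists (rcons q u).
  + split => [r w' u' ts' /=|r b /= hr]; last exact: IHp hr.
    case: (eqVneq r a) => [->|nr]; first by rewrite upd_at' => -[<- _ _]; exists (rcons q u).
    by rewrite !upd_ne' //; apply: IHt.
Qed.

End Exec.

End ArrowProof.
Import ArrowProof.

Local Open Scope ring_scope.

Theorem lemma12 (R : realFieldType) (V : finType) (adj : rel V) (wt : V -> V -> R)
    (v0 : V) (I : finType) (d : I) (rv : I -> V) (rt : I -> R) (link0 : V -> V)
    (es : seq (R * event I)) :
  is_tree adj ->
  (forall x y, adj x y -> 0 < wt x y /\ wt x y = wt y x) ->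
  rv d = v0 -> rt d = 0 ->
  init_links adj v0 link0 ->
  arrow_execution d rv rt wt link0 es ->
  forall a b : I,
    predq (state_after rv (init_state R link0 d) es) a = Some b ->
    forall p : seq V, path adj (rv a) p -> last (rv a) p = rv b -> uniq (rv a :: p) ->
    forall u, u \in rv a :: p ->
      exists2 k, visits rv link0 d es a u k &
        forall c k', c != a ->
          queued_after (predq (state_after rv (init_state R link0 d) es)) c a ->
          visits rv link0 d es c u k' -> (k < k')%N.
Proof.
move=> Ht _ Hd _ Hi He a b hab p hp hl hu u hin.
have Fin : state_after rv (init_state R link0 d) es = sA d rv link0 es (size es).
  by rewrite /sA take_size.
rewrite Fin in hab *.
have [_ Tp] := all_traj Ht Hd Hi He (leqnn (size es)).
have [q [hq hlq hvq]] := Tp _ _ hab.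
have hin' : u \in rv a :: q.
  case: (shortenP hq) hlq => q' hq' uq' sub hlq'.
  have e : q' = p.
    case: Ht => _ _ _ uP; apply: (uP (rv a)) => //; by rewrite hlq' hl.
  move: hin; rewrite -e !in_cons => /orP [->//|/sub ->]; by rewrite orbT.
have [k hk] := hvq _ hin'.
exists k => // c k' nc hqa hk'.
rewrite ltnNge; apply/negP => hle.
case: (eqVneq k' k) => [ek|nk].
  move: hk hk'; rewrite ek; case=> hs m1 [_ m2]; move: m1 m2.
  case: (ohead (drop k es)) => // [[t [x|x]]] /=.
    by case=> ea _ [ec _]; move: nc; rewrite -ec ea eqxx.
  by case=> ea _ [ec _]; move: nc; rewrite -ec ea eqxx.
have hlt : (k' < k)%N by rewrite ltn_neqAle nk hle.
have h1 := chase Ht Hd Hi He hk' hk hlt.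
have hN : forall z, N (sA d rv link0 es (size es)) z = predq (sA d rv link0 es (size es)) z.
  move=> z; rewrite /N; by rewrite (final_transit He).
have h2 : reach (N (sA d rv link0 es (size es))) c a.
  apply: (reach_ext (f := predq (sA d rv link0 es (size es)))) => // z; by rewrite hN.
have [_ _ _ _ _ _ _ Ac] := all_inv Ht Hd Hi He (leqnn (size es)).
apply: (cycle_of (f := N (sA d rv link0 es (size es))) _ h2 h1 Ac).
by move=> e; rewrite e eqxx in nc.
Qed.
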